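(* Let $(Z_i)_{i\ge1}$ be i.i.d. real random variables with $P(Z_1>x)\sim c\,e^{-\alpha x}$ as $x\to\infty$, for constants $c,\alpha>0$. Then there exists $\delta>0$, depending only on the law of $Z_1$, such that for every countable family $(x_i)$ of real numbers for which $Y:=\sup_i(x_i+Z_i)<\infty$ a.s., one has $\mathrm{conc}(\mathrm{dist}(Y),\delta)\le1-\delta$.
   Context: For a random variable $Y$ and $\delta>0$, $\mathrm{conc}(\mathrm{dist}(Y),\delta)=\sup_{a\in\mathbb R}P(a\le Y\le a+\delta)$. *)

(* Defs.v *)
From HB Require Import structures.
From mathcomp Require Import all_boot all_order all_algebra.
From mathcomp Require Import all_classical all_reals all_analysis.
Set Implicit Arguments. Unset Strict Implicit. Unset Printing Implicit Defensive.
Import Order.TTheory GRing.Theory Num.Theory.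
Import numFieldNormedType.Exports.
Local Open Scope classical_set_scope.
Local Open Scope ring_scope.

Definition mutually_independent (d : measure_display) (T : measurableType d)
  (R : realType) (P : probability T R) (Z : nat -> T -> R) : Prop :=
  forall (s : seq nat) (B : nat -> set R),
    uniq s -> (forall i, measurable (B i)) ->
    P (\bigcap_(i in [set` s]) (Z i @^-1` B i)) =
    (\prod_(i <- s) P (Z i @^-1` B i))%E.

Definition identically_distributed (d : measure_display) (T : measurableType d)
  (R : realType) (P : probability T R) (Z : nat -> T -> R) : Prop :=
  forall (i : nat) (B : set R), measurable B ->
    P (Z i @^-1` B) = P (Z 0 @^-1` B).

Definition conc (d : measure_display) (T : measurableType d)
  (R : realType) (P : probability T R) (Y : T -> \bar R) (delta : R) : \bar R :=
  ereal_sup [set P [set t | ((a%:E <= Y t) && (Y t <= (a + delta)%:E))%E]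
            | a in [set: R]].

(* Main.v *)
Require Import Defs.
From HB Require Import structures.
From mathcomp Require Import all_boot all_order all_algebra.
From mathcomp Require Import all_classical all_reals all_analysis.
From mathcomp Require Import measurable_realfun.
From mathcomp Require Import ring lra.
Import Order.TTheory GRing.Theory Num.Theory.
Import numFieldNormedType.Exports.
Local Open Scope classical_set_scope.
Local Open Scope ring_scope.

Lemma prod_sum_le (R : realType) (I : Type) (s : seq I) (q : I -> R) :
  (forall i, 0 <= q i <= 1) ->
  0 <= \prod_(i <- s) (1 - q i) <= 1 /\
  \prod_(i <- s) (1 - q i) * (1 + \sum_(i <- s) q i) <= 1.
Proof.
move=> hq; elim: s => [|j s [/andP[p0 p1] IH]].
  by rewrite !big_nil; split; [rewrite ler01 lexx|rewrite addr0 mulr1].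
rewrite !big_cons; have /andP[q0 q1] := hq j.
set p := \prod_(i <- s) _ in p0 p1 IH *; set S := \sum_(i <- s) _ in IH *.
split; first by apply/andP; split; nra.
nra.
Qed.

Lemma tail_bound (R : realType) (G : R -> R) (c alpha : R) :
  0 < c -> 
  (G x / (c * expR (- (alpha * x)))) @[x --> +oo] --> (1 : R) ->
  exists x0 : R, forall y, x0 < y ->
    c / 2 * expR (- (alpha * y)) <= G y <= 2 * c * expR (- (alpha * y)).
Proof.
move=> c0 /cvgrPdist_lt /(_ (2^-1)) [] // M [_ HM].
exists M => y My; have := HM _ My.
set E := expR _; have E0 : 0 < E by apply: expR_gt0.
have cE0 : 0 < c * E by apply: mulr_gt0.
rewrite ltr_distlC => /andP[h1 h2].
have e1 : G y = (G y / (c * E)) * (c * E) by rewrite divfK // gt_eqF.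
set r := G y / (c * E) in h1 h2 e1.
rewrite e1; apply/andP; split; nra.
Qed.

Set Implicit Arguments. Unset Strict Implicit.
Section Lem.
Context d (T : measurableType d) (R : realType) (P : probability T R) (Z : nat -> T -> R).
Hypothesis mZ : forall i, measurable_fun setT (Z i).
Hypothesis idZ : identically_distributed P Z.

Definition Gb (y : R) := fine (P [set t | y < Z 0 t]).

Lemma mpre i B : measurable B -> measurable (Z i @^-1` B).
Proof. by move=> mB; rewrite -[_ @^-1` _]setTI; exact: mZ. Qed.

Lemma gtE i y : [set t | y < Z i t] = Z i @^-1` `]y, +oo[.
Proof. by apply/seteqP; split => t /=; rewrite in_itv /= andbT. Qed.

Lemma leE i y : [set t | Z i t <= y] = Z i @^-1` `]-oo, y].
Proof. by apply/seteqP; split => t /=; rewrite in_itv /=. Qed.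

Lemma mgt i y : measurable [set t | y < Z i t].
Proof. by rewrite gtE; apply: mpre. Qed.

Lemma mle i y : measurable [set t | Z i t <= y].
Proof. by rewrite leE; apply: mpre. Qed.

Lemma PgtE i y : P [set t | y < Z i t] = (Gb y)%:E.
Proof.
rewrite /Gb gtE idZ // -gtE fineK //; exact: fin_num_measure (mgt 0 y).
Qed.

Lemma Gb_ge0 y : 0 <= Gb y.
Proof. by rewrite /Gb fine_ge0. Qed.

Lemma Gb_le1 y : Gb y <= 1.
Proof.
rewrite -lee_fin -(PgtE 0); exact: probability_le1 (mgt 0 y).
Qed.

Lemma PleE i y : P [set t | Z i t <= y] = (1 - Gb y)%:E.
Proof.
have -> : [set t | Z i t <= y] = ~` [set t | y < Z i t].
  by apply/seteqP; split => t /=; rewrite leNgt => /negP.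
rewrite probability_setC; last exact: mgt.
rewrite PgtE //.
Qed.

Lemma Gb_mono y z : y <= z -> Gb z <= Gb y.
Proof.
move=> yz; rewrite -lee_fin -(PgtE 0) -(PgtE 0).
apply: le_measure; rewrite ?inE; try exact: mgt.
by move=> t /= zt; apply: le_lt_trans zt.
Qed.

End Lem.

Unset Implicit Arguments. Set Strict Implicit.

Theorem lemma27 (d : measure_display) (T : measurableType d) (R : realType)
  (P : probability T R) (Z : nat -> T -> R) (c alpha : R) :
  (forall i, measurable_fun setT (Z i)) ->
  mutually_independent P Z ->
  identically_distributed P Z ->
  0 < c -> 0 < alpha ->
  (fine (P [set t | x < Z 0%N t]) / (c * expR (- (alpha * x))))
    @[x --> +oo] --> (1 : R) ->
  exists delta : R, 0 < delta /\
    forall (I : set nat) (x : nat -> R),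
      I !=set0 ->
      let Y := fun t => ereal_sup [set (x i + Z i t)%:E | i in I] in
      P [set t | Y t = +oo%E] = 0%E ->
      (conc P Y delta <= (1 - delta)%:E)%E.
Proof.
move=> mZ indep idZ c0 a0 Htail.
have [x0 Hx0] := @tail_bound R (Gb P Z) c alpha c0 Htail.
set g := Gb P Z (x0 + 2).
have g0 : 0 < g.
  have /andP[+ _] := Hx0 (x0 + 2) ltac:(by rewrite ltrDl).
  by apply: lt_le_trans; apply: mulr_gt0; [apply: divr_gt0|apply: expR_gt0].
set K := 4 * expR (2 * alpha).
have K0 : 0 < K by apply: mulr_gt0 => //; apply: expR_gt0.
set th := (2 * K)^-1.
have th0 : 0 < th by rewrite invr_gt0 mulr_gt0.
have Kth : K * th = 2^-1 by rewrite /th invfM mulrCA divff ?gt_eqF // mulr1.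
set delta := Num.min 1 (Num.min g (th / (1 + th))).
have dpos : 0 < delta.
  by rewrite !lt_min ltr01 g0 divr_gt0 // addr_gt0.
have d1 : delta <= 1 by rewrite ge_min lexx.
have dg : delta <= g by rewrite !ge_min lexx orbT.
have dth : delta <= th / (1 + th) by rewrite !ge_min lexx !orbT.
exists delta; split => // I x I0 Y _.
apply: ge_ereal_sup => _ [a _ <-].
set tgt := [set t | _].
pose f := fun k t => if k \in I then ((x k + Z k t)%:E)%E else -oo%E.
have YE : Y = (fun t => esups (f ^~ t) 0).
  apply/funext => t; rewrite /Y /esups /=; apply/eqP; rewrite eq_le; apply/andP; split.
    apply: ge_ereal_sup => _ [i Ii <-]; apply: ereal_sup_ubound.
    by exists i => //; rewrite /f mem_set.
  apply: ge_ereal_sup => _ [k _ <-]; rewrite /f; case: ifPn => [/set_mem Ik|_].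
    by apply: ereal_sup_ubound; exists k.
  exact: leNye.
have mY : measurable_fun [set: T] (Y : T -> \bar R).
  rewrite YE; apply: measurable_fun_esups => k; rewrite /f.
  case: (k \in I) => /=; last exact: measurable_cst.
  by apply: measurableT_comp => //; apply: measurable_funD => //.
have mtgt : measurable tgt.
  have -> : tgt = (setT `&` [set t | (a%:E <= Y t)%E]) `&` (setT `&` [set t | (Y t <= (a + delta)%:E)%E]).
    by apply/seteqP; split => t /=; [case/andP => h1 h2|case=> [[_ h1] [_ h2]]; apply/andP].
  by apply: measurableI; [apply: emeasurable_fun_c_infty|apply: emeasurable_fun_infty_c].
have sub_le : forall i, I i -> tgt `<=` [set t | Z i t <= a + delta - x i].
  move=> i Ii t /andP[_ h].
  have : ((x i + Z i t)%:E <= Y t)%E by apply: ereal_sup_ubound; exists i.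
  move=> /le_trans /(_ h); rewrite lee_fin /= => h2; lra.
have [[i Ii hi]|Hsmall] := pselect (exists2 i, I i & delta <= Gb P Z (a + delta - x i)).
  apply: (@le_trans _ _ (P [set t | Z i t <= a + delta - x i])).
    by apply: le_measure; rewrite ?inE //; [exact: mle | exact: sub_le].
  by rewrite (PleE mZ idZ) lee_fin lerB.
have Hq : forall i, I i -> Gb P Z (a + delta - x i) < delta.
  move=> i Ii; rewrite ltNge; apply/negP => h; apply: Hsmall; by exists i.
have Hw : forall i, I i -> x0 + 2 < a + delta - x i.
  move=> i Ii; rewrite ltNge; apply/negP => h; have := Gb_mono mZ idZ h.
  rewrite -/g; have := Hq i Ii; lra.
have Hp : forall i, I i -> Gb P Z (a - delta - x i) <= K * Gb P Z (a + delta - x i).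
  move=> i Ii; have w1 := Hw i Ii.
  have /andP[_ hp] := Hx0 (a - delta - x i) ltac:(lra).
  have /andP[hq _] := Hx0 (a + delta - x i) ltac:(lra).
  have eE : expR (- (alpha * (a - delta - x i))) =
      expR (- (alpha * (a + delta - x i))) * expR (2 * alpha * delta).
    by rewrite -expRD; congr expR; ring.
  have eK : expR (2 * alpha * delta) <= expR (2 * alpha).
    by rewrite ler_expR; nra.
  rewrite eE in hp.
  set E := expR (- (alpha * (a + delta - x i))) in hq hp.
  have E0 : 0 < E := expR_gt0 _.
  set e1 := expR (2 * alpha * delta) in hp eK.
  set e2 := expR (2 * alpha) in eK *.
  have e20 : 0 < e2 := expR_gt0 _.
  have h1 : 2 * c * (E * e1) <= 2 * c * (E * e2).
    by rewrite ler_pM2l ?mulr_gt0 // ler_pM2l.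
  have h2 : 2 * c * (E * e2) <= 4 * e2 * Gb P Z (a + delta - x i).
    have : c / 2 * E * e2 <= Gb P Z (a + delta - x i) * e2 by rewrite ler_pM2r.
    lra.
  rewrite /K -/e2; lra.
pose qq k := if k \in I then Gb P Z (a + delta - x k) else 0.
have [[n hn]|Hsm] := pselect (exists n, th <= \sum_(0 <= k < n) qq k).
  pose s := [seq k <- iota 0 n | k \in I].
  have us : uniq s := filter_uniq _ (iota_uniq 0 n).
  pose B := fun i => `]-oo, a + delta - x i]%classic.
  have := indep s B us (fun i => measurable_itv _).
  have -> : (\prod_(i <- s) P (Z i @^-1` B i) =
      (\prod_(i <- s) (1 - Gb P Z (a + delta - x i)))%:E)%E.
    by rewrite -prodEFin; apply: eq_bigr => i _; rewrite -leE (PleE mZ idZ).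
  move=> Hind.
  apply: (@le_trans _ _ (P (\bigcap_(i in [set` s]) Z i @^-1` B i))).
    apply: le_measure; rewrite ?inE //.
      apply: bigcap_measurableType => k _; rewrite -[_ @^-1` _]setTI; by apply: mZ => //; exact: measurable_itv.
    move=> t ht i; rewrite /= mem_filter => /andP[/set_mem Ii _]; rewrite /B /= in_itv /=.
    exact: (sub_le i Ii t ht).
  rewrite Hind lee_fin.
  have q01 : forall i, 0 <= Gb P Z (a + delta - x i) <= 1.
    by move=> i; rewrite Gb_ge0 Gb_le1.
  have [/andP[p0 p1] hps] := @prod_sum_le R nat s _ q01.
  have hS : \sum_(0 <= k < n) qq k = \sum_(i <- s) Gb P Z (a + delta - x i).
    by rewrite /s big_filter [RHS]big_mkcond /index_iota subn0.
  rewrite -hS in hps.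
  move: dth; rewrite ler_pdivlMr ?addr_gt0 // => dth'.
  nra.
have Hsm' : forall n, \sum_(0 <= k < n) qq k < th.
  by move=> n; rewrite ltNge; apply/negP => h; apply: Hsm; exists n.
pose Bk k := if k \in I then [set t | a - delta - x k < Z k t] else set0.
have mB : forall k, measurable (Bk k).
  by move=> k; rewrite /Bk; case: ifP => _; [exact: mgt|exact: measurable0].
have subU : tgt `<=` \bigcup_k Bk k.
  move=> t /andP[h1 _].
  have : ((a - delta)%:E < Y t)%E by apply: lt_le_trans h1; rewrite lte_fin; lra.
  move/ereal_sup_gt => [_ [i Ii <-]]; rewrite lte_fin => hi.
  by exists i => //; rewrite /Bk mem_set //=; lra.
apply: le_trans (measure_sigma_subadditive P mB mtgt subU) _.
have K1 : 1 <= K by rewrite /K; have := expR_ge1Dx (2 * alpha); lra.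
have thK : th * (2 * K) = 1 by rewrite mulVf // gt_eqF // mulr_gt0.
move: dth; rewrite ler_pdivlMr ?addr_gt0 // => dth2.
apply: (@le_trans _ _ (2^-1)%:E); last by rewrite lee_fin; nra.
apply: lime_le; first exact: is_cvg_nneseries.
apply: nearW => n.
apply: (@le_trans _ _ (\sum_(0 <= k < n) (K * qq k)%:E)%E).
  apply: lee_sum => k _; rewrite /Bk /qq; case: ifPn => [/set_mem Ik|_].
    rewrite [X in (X <= _)%E](_ : _ = (Gb P Z (a - delta - x k))%:E); last first.
      exact: (PgtE mZ idZ k (a - delta - x k)).
    by rewrite lee_fin; exact: Hp.
  by rewrite measure0 mulr0.
rewrite sumEFin lee_fin -mulr_sumr -Kth ler_pM2l //; exact: ltW (Hsm' n).
Qed.
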